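(* Fix $0<B<1$ and $H>0$, let $$x(s)=\frac1H\sqrt{1+B^2+2B\sin\!\big(Hs+\tfrac{3\pi}{2}\big)},\qquad z(s)=\int_{3\pi/(2H)}^{\,s+3\pi/(2H)}\frac{1+B\sin(Ht)}{\sqrt{1+B^2+2B\sin(Ht)}}\,dt ,$$ $\beta(s)=(x(s),0,z(s))$, and let $\Sigma$ be the (complete) unduloid obtained by rotating $\beta$ about the $z$-axis, with unit normal $N=(-z'\cos\theta,-z'\sin\theta,x')$ at $(x(s)\cos\theta,x(s)\sin\theta,z(s))$ and constant mean curvature $H$ with respect to $N$. For $n\in\mathbb N$ let $$t_n=-\frac1H\sin^{-1}(-B)+\frac{(4n-1)\pi}{2H}\quad(\text{so }\sin(Ht_n+\tfrac{3\pi}{2})=-B),$$ and $p_n=\beta(t_n)$. Then there is $n_0\in\mathbb N$ such that for all $n\ge n_0$, $$|\Phi|^2\langle\vec x,N\rangle^2>\tfrac12\big(2+H\langle\vec x,N\rangle\big)^2\quad\text{at }p_n.$$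
   Context: Conventions: $\sin^{-1}:[-1,1]\to[-\pi/2,\pi/2]$; shape operator $A$ w.r.t. $N$ defined by $\langle A(Y),Z\rangle=\langle\bar\nabla_YZ,N\rangle$; mean curvature $H=\operatorname{tr}A$ (unnormalized); $\Phi=\Pi-\frac H2g_\Sigma$, so $|\Phi|^2=|A|^2-H^2/2$; $\vec x$ the position vector. *)

(* Defs.v *)
From Stdlib Require Import Reals.
Open Scope R_scope.

Definition xprof (B H s : R) : R :=
  / H * sqrt (1 + B ^ 2 + 2 * B * sin (H * s + 3 * PI / 2)).

(* Integrand defining z(s) = int_{3pi/(2H)}^{s+3pi/(2H)} zint t dt. *)
Definition zint (B H t : R) : R :=
  (1 + B * sin (H * t)) / sqrt (1 + B ^ 2 + 2 * B * sin (H * t)).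

Definition tn (B H : R) (n : nat) : R :=
  - (1 / H) * asin (- B) + (4 * INR n - 1) * PI / (2 * H).

(* Geometry of the surface of revolution X(s,th) = (x cos th, x sin th, z)
   with N = (-z' cos th, -z' sin th, x').  Second fundamental form
   h(Y,Z) = <Dbar_Y Z, N>:  h(X_s,X_s) = x' z'' - x'' z',
   h(X_th,X_th) = x z', h(X_s,X_th) = 0; metric g_ss = x'^2+z'^2, g_thth = x^2.
   Principal curvatures (eigenvalues of A): *)
Definition kap1 (x1 x2 z1 z2 : R) : R := (x1 * z2 - x2 * z1) / (x1 ^ 2 + z1 ^ 2).
Definition kap2 (x z1 : R) : R := z1 / x.

(* |Phi|^2 = |A|^2 - H^2/2 with H = tr A (unnormalized). *)
Definition Phi2 (k1 k2 : R) : R := (k1 ^ 2 + k2 ^ 2) - (k1 + k2) ^ 2 / 2.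

(* <vec x, N> at (x cos th, x sin th, z):  -x z' + z x'. *)
Definition supp (x z x1 z1 : R) : R := - x * z1 + z * x1.

(* Main.v *)
Require Import Defs.
From Stdlib Require Import Reals Lra FunctionalExtensionality.
From Coquelicot Require Import Coquelicot.
Open Scope R_scope.


Lemma Fpos (B u : R) : 0 < B -> B < 1 -> 0 < 1 + B ^ 2 + 2 * B * sin u.
Proof. intros. pose proof (SIN_bound u). nra. Qed.

Lemma zint_cont (B H : R) : 0 < B -> B < 1 -> forall x, continuous (zint B H) x.
Proof.
  intros hB0 hB1 x. apply (@ex_derive_continuous R_AbsRing R_NormedModule). unfold zint.
  auto_derive. split. apply Fpos; auto. split; auto.
  apply Rgt_not_eq, sqrt_lt_R0, Fpos; auto.
Qed.

Lemma zint_lb (B H : R) : 0 < B -> B < 1 -> forall x, (1 - B) / (1 + B) <= zint B H x.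
Proof.
  intros hB0 hB1 x. unfold zint. set (u := sin (H * x)).
  pose proof (SIN_bound (H*x)) as Hu. fold u in Hu.
  set (S := sqrt (1 + B ^ 2 + 2 * B * u)).
  assert (HF : 0 < 1 + B ^ 2 + 2 * B * u) by nra.
  assert (HS : 0 < S) by (apply sqrt_lt_R0; auto).
  assert (HS2 : S ^ 2 = 1 + B ^ 2 + 2 * B * u) by (apply pow2_sqrt; lra).
  assert (HSle : S <= 1 + B) by nra.
  apply Rle_trans with ((1 - B) / S).
  - unfold Rdiv. apply Rmult_le_compat_l. lra. apply Rinv_le_contravar; lra.
  - unfold Rdiv. apply Rmult_le_compat_r. left; apply Rinv_0_lt_compat; lra. nra.
Qed.

Theorem lemma3p7 (B H : R) (hB0 : 0 < B) (hB1 : B < 1) (hH : 0 < H)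
  (z x1 x2 z1 z2 : R -> R)
  (hz : forall (s : R)
          (pr : Riemann_integrable (zint B H) (3 * PI / (2 * H)) (s + 3 * PI / (2 * H))),
          z s = RiemannInt pr)
  (hx1 : forall s, derivable_pt_lim (xprof B H) s (x1 s))
  (hx2 : forall s, derivable_pt_lim x1 s (x2 s))
  (hz1 : forall s, derivable_pt_lim z s (z1 s))
  (hz2 : forall s, derivable_pt_lim z1 s (z2 s)) :
  exists n0 : nat, forall n : nat, (n0 <= n)%nat ->
    let t := tn B H n in
    let k1 := kap1 (x1 t) (x2 t) (z1 t) (z2 t) in
    let k2 := kap2 (xprof B H t) (z1 t) in
    let q := supp (xprof B H t) (z t) (x1 t) (z1 t) in
    Phi2 k1 k2 * q ^ 2 > 1 / 2 * (2 + H * q) ^ 2.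
Proof.
  set (a := 3 * PI / (2 * H)).
  assert (Hex : forall u v, ex_RInt (zint B H) u v).
  { intros u v. apply (@ex_RInt_continuous R_CompleteNormedModule). intros; apply zint_cont; auto. }
  assert (Zeq : z = fun s => RInt (zint B H) a (s + a)).
  { apply functional_extensionality; intro s.
    rewrite (hz s (ex_RInt_Reals_0 _ _ _ (Hex _ _))). symmetry; apply RInt_Reals. }
  assert (Z1 : forall s, z1 s = zint B H (s + a)).
  { intro s. pose proof (hz1 s) as D. apply is_derive_Reals in D. rewrite Zeq in D.
    apply is_derive_unique in D. rewrite <- D. apply is_derive_unique.
    assert (E : is_derive (fun x => RInt (zint B H) a ((fun s => s + a) x)) s (scal 1 (zint B H (s+a)))).
    { apply (is_derive_comp (K:=R_AbsRing) (V:=R_NormedModule) (fun b => RInt (zint B H) a b) (fun s => s + a)).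
    - apply (is_derive_RInt (zint B H) (fun b => RInt (zint B H) a b) a (s + a)).
      + apply filter_forall. intro b. apply (@RInt_correct R_CompleteNormedModule), Hex.
      + apply zint_cont; auto.
    - auto_derive; reflexivity. }
    replace (scal 1 (zint B H (s + a))) with (zint B H (s + a)) in E by (unfold scal; simpl; unfold mult; simpl; ring). exact E. }
  assert (Z1f : z1 = fun s => zint B H (s + a)) by (apply functional_extensionality; exact Z1).
  assert (X1 : forall s, x1 s = B * cos (H * s + 3 * PI / 2) / sqrt (1 + B ^ 2 + 2 * B * sin (H * s + 3 * PI / 2))).
  { intro s. pose proof (hx1 s) as D. apply is_derive_Reals in D. apply is_derive_unique in D.
    rewrite <- D. apply is_derive_unique. unfold xprof.
    assert (hF := Fpos B (H * s + 3 * PI / 2) hB0 hB1).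
    assert (hS := sqrt_lt_R0 _ hF).
    auto_derive. lra. replace (B * (B * 1)) with (B ^ 2) by ring. field. lra. }
  assert (X1f : x1 = fun s => B * cos (H * s + 3 * PI / 2) / sqrt (1 + B ^ 2 + 2 * B * sin (H * s + 3 * PI / 2)))
    by (apply functional_extensionality; exact X1).
  set (c := sqrt (1 - B ^ 2)).
  assert (hc : 0 < c) by (apply sqrt_lt_R0; nra).
  assert (hc2 : c ^ 2 = 1 - B ^ 2) by (apply pow2_sqrt; nra).
  assert (Hsq : sqrt (1 + B ^ 2 + 2 * B * - B) = c) by (unfold c; f_equal; ring).
  assert (Hphi : forall n, sin (H * tn B H n + 3 * PI / 2) = - B /\ cos (H * tn B H n + 3 * PI / 2) = - c).
  { intro n. replace (H * tn B H n + 3 * PI / 2) with (asin B + PI + 2 * INR n * PI)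
      by (unfold tn; rewrite asin_opp; field; lra).
    rewrite sin_period, cos_period, neg_sin, neg_cos, sin_asin, cos_asin by lra.
    split; [reflexivity|]. unfold c, Rsqr. do 3 f_equal. ring. }
  set (m := (1 - B) / (1 + B)).
  assert (hm0 : 0 < m) by (unfold m; apply Rdiv_lt_0_compat; lra).
  assert (hm1 : m < 1) by (unfold m; apply (Rmult_lt_reg_r (1 + B)); [lra|]; field_simplify; lra).
  destruct (INR_unbounded (/ m)) as [n0 Hn0].
  exists n0. intros n Hn t k1 k2 q.
  destruct (Hphi n) as [Hs Hc]. fold t in Hs, Hc.
  assert (Hnm : INR n * m > 1).
  { assert (INR n0 <= INR n) by (apply le_INR; exact Hn).
    assert (INR n > / m) by lra.
    apply Rmult_gt_compat_r with (r := m) in H1; [|lra]. rewrite Rinv_l in H1; lra. }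
  assert (Hn1 : INR n > 1) by nra.
  assert (Htn : H * t = asin B + (4 * INR n - 1) * PI / 2) by (unfold t, tn; rewrite asin_opp; field; lra).
  assert (HtI : H * t >= INR n).
  { pose proof (asin_bound B). pose proof PI2_1. nra. }
  assert (ht0 : 0 <= t) by nra.
  assert (Hat : H * (t + a) = H * t + 3 * PI / 2) by (unfold a; field; lra).
  assert (Hz : H * z t > B).
  { assert (z t >= t * m).
    { rewrite Zeq. apply Rle_ge.
      apply Rle_trans with (RInt (fun _ => m) a (t + a)).
      - rewrite RInt_const. unfold scal; simpl; unfold mult; simpl. lra.
      - apply RInt_le. lra. apply ex_RInt_const. apply Hex.
        intros; apply zint_lb; auto. }
    nra. }
  assert (xv : xprof B H t = / H * c) by (unfold xprof; rewrite Hs, Hsq; reflexivity).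
  assert (x1v : x1 t = - B) by (rewrite X1, Hs, Hc, Hsq; field; lra).
  assert (z1v : z1 t = c).
  { rewrite Z1; unfold zint. rewrite Hat, Hs, Hsq.
    replace (1 + B * - B) with (c ^ 2) by (rewrite hc2; ring). field; lra. }
  assert (x2v : x2 t = 0).
  { pose proof (hx2 t) as D. rewrite X1f in D. apply is_derive_Reals, is_derive_unique in D.
    rewrite <- D. apply is_derive_unique.
    auto_derive; rewrite ?Hat, ?Hs, ?Hc; replace (B * (B * 1)) with (B ^ 2) by ring; rewrite ?Hsq.
    - repeat split; try lra. nra.
    - field; lra. }
  assert (z2v : z2 t = 0).
  { pose proof (hz2 t) as D. rewrite Z1f in D. apply is_derive_Reals, is_derive_unique in D.
    rewrite <- D. apply is_derive_unique. unfold zint.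
    auto_derive; rewrite ?Hat, ?Hs, ?Hc; replace (B * (B * 1)) with (B ^ 2) by ring; rewrite ?Hsq.
    - repeat split; try lra. nra.
    - replace (1 + B * - B) with (c ^ 2) by (rewrite hc2; ring). field; lra. }
  assert (k1v : k1 = 0).
  { unfold k1, kap1. rewrite x2v, z2v.
    replace (x1 t * 0 - 0 * z1 t) with 0 by ring. unfold Rdiv; ring. }
  assert (k2v : k2 = H).
  { unfold k2, kap2. rewrite xv, z1v. field; lra. }
  assert (HQ : H * q < -1).
  { unfold q, supp. rewrite xv, x1v, z1v.
    replace (H * (- (/ H * c) * c + z t * - B)) with (- c ^ 2 - B * (H * z t)) by (field; lra).
    rewrite hc2. nra. }
  rewrite k1v, k2v. unfold Phi2. nra.
Qed.
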